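(* Let $k$ be a field, let $M$ be an $n$-dimensional vector space over $k$ with basis $\{m_1,\dots,m_n\}$, and let $\phi:\{1,\dots,n\}\to\{1,\dots,n\}$ be a function with $\phi^2=\phi$. Define $R^\phi:M\otimes M\to M\otimes M$ by $$R^\phi(m_i\otimes m_j)=\delta_{ij}\,\delta_{i\in \mathrm{Im}(\phi)}\sum_{a,b\in\phi^{-1}(i)} m_a\otimes m_b$$ for all $i,j=1,\dots,n$, where $\delta_{i\in\mathrm{Im}(\phi)}$ equals $1$ if $i\in\mathrm{Im}(\phi)$ and $0$ otherwise. Then $R:=R^\phi$ is symmetric and satisfies $$R^{12}R^{13}=R^{13}R^{12}=R^{12}R^{23}=R^{23}R^{12}.$$ In particular, $R^\phi$ is a solution of the Long equation $R^{12}R^{13}=R^{13}R^{12}$, $R^{12}R^{23}=R^{23}R^{12}$.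
   Context: For $R\in\mathrm{End}_k(M\otimes M)$: $R^{12}=R\otimes I$, $R^{23}=I\otimes R$, $R^{13}=(I\otimes\tau)(R\otimes I)(I\otimes\tau)$, where $\tau(m\otimes n)=n\otimes m$ is the flip, and these are viewed in $\mathrm{End}_k(M\otimes M\otimes M)$. $R$ is called symmetric if $R^{12}=R^{21}$, where $R^{21}=\tau R\tau$; in coordinates, writing $R(m_v\otimes m_u)=\sum_{i,j}x^{ji}_{uv}m_i\otimes m_j$, symmetry is expressed as $x^{ji}_{uv}=x^{ji}_{vu}$ for all $i,j,u,v$. *)

(* Defs.v *)
From mathcomp Require Import all_boot all_algebra.
Set Implicit Arguments. Unset Strict Implicit. Unset Printing Implicit Defensive.
Import GRing.Theory.
Local Open Scope ring_scope.

(* M = k^n with basis m_0..m_{n-1} (indices 'I_n).  M (x) M has basis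
   m_a (x) m_b indexed by pairs, M (x) M (x) M by triples.  An endomorphism
   is represented by its matrix in these bases:
   A p q = coefficient of the basis vector m_p in A(m_q). *)
Section Tensor.
Variables (k : fieldType) (n : nat).

Definition idx2 := ('I_n * 'I_n)%type.
Definition idx3 := ('I_n * 'I_n * 'I_n)%type.
Definition end2 := idx2 -> idx2 -> k.
Definition end3 := idx3 -> idx3 -> k.

Definition comp2 (A B : end2) : end2 :=
  fun p q => \sum_(r : idx2) A p r * B r q.
Definition comp3 (A B : end3) : end3 :=
  fun p q => \sum_(r : idx3) A p r * B r q.

Definition tau : end2 :=
  fun p q => ((p.1 == q.2) && (p.2 == q.1))%:R.
Definition id_tau : end3 :=
  fun p q => let: (a, b, c) := p in let: (u, v, w) := q in
             [&& a == u, b == w & c == v]%:R.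

Definition R12 (R : end2) : end3 :=
  fun p q => let: (a, b, c) := p in let: (u, v, w) := q in
             R (a, b) (u, v) * (c == w)%:R.
Definition R23 (R : end2) : end3 :=
  fun p q => let: (a, b, c) := p in let: (u, v, w) := q in
             (a == u)%:R * R (b, c) (v, w).
Definition R13 (R : end2) : end3 := comp3 id_tau (comp3 (R12 R) id_tau).
Definition R21 (R : end2) : end2 := comp2 tau (comp2 R tau).

(* The paper defines it as R^12 = R^21 (i.e. R = tau R tau) and
   states that in coordinates it reads x^{ji}_{uv} = x^{ji}_{vu}, where
   R(m_v (x) m_u) = sum_{i,j} x^{ji}_{uv} m_i (x) m_j, i.e. the coordinate
   of m_i (x) m_j in R(m_v (x) m_u) equals that in R(m_u (x) m_v).
   We require both forms. *)
Definition symmetricR (R : end2) : Prop :=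
  R21 R = R /\ (forall i j u v, R (i, j) (v, u) = R (i, j) (u, v)).

Definition Rphi (phi : 'I_n -> 'I_n) : end2 :=
  fun p q => let: (a, b) := p in let: (i, j) := q in
    (i == j)%:R * (i \in codom phi)%:R * ((phi a == i) && (phi b == i))%:R.

End Tensor.

(* Main.v *)
Require Import Defs.
From mathcomp Require Import all_boot all_algebra.
From Stdlib Require Import FunctionalExtensionality.
Set Implicit Arguments. Unset Strict Implicit. Unset Printing Implicit Defensive.
Import GRing.Theory.
Local Open Scope ring_scope.

Section Aux.
Variables (k : fieldType) (n : nat) (phi : 'I_n -> 'I_n).
Hypothesis hphi : forall i, phi (phi i) = phi i.

Lemma sum_delta (T : finType) (r0 : T) (F : T -> k) :
  (forall r, r != r0 -> F r = 0) -> \sum_r F r = F r0.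
Proof. by move=> H; rewrite (bigD1 r0) //= big1 ?addr0 // => r /H. Qed.

Lemma sum_bool (T : finType) (r0 : T) (B : T -> bool) :
  (forall r, B r -> r = r0) -> \sum_r ((B r)%:R : k) = (B r0)%:R.
Proof.
move=> H; apply: sum_delta => r Hr; case Br: (B r) => //.
by rewrite (H _ Br) eqxx in Hr.
Qed.

Definition Rb (a b i j : 'I_n) := [&& i == j, phi a == i & phi b == i].

Lemma RphiE a b i j : Rphi k phi (a, b) (i, j) = (Rb a b i j)%:R.
Proof.
rewrite /Rphi /Rb -!natrM !mulnb; congr (_ %:R).
case: (i =P j) => //= _; case: (phi a =P i) => [<-|]; rewrite ?andbF //.
by rewrite codom_f.
Qed.

Lemma R12E a b c u v w :
  R12 (Rphi k phi) (a, b, c) (u, v, w) = (Rb a b u v && (c == w))%:R.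
Proof. by rewrite /R12 RphiE -natrM mulnb. Qed.

Lemma R23E a b c u v w :
  R23 (Rphi k phi) (a, b, c) (u, v, w) = ((a == u) && Rb b c v w)%:R.
Proof. by rewrite /R23 RphiE -natrM mulnb. Qed.

Lemma id_tauE (p q : idx3 n) :
  @id_tau k n p q = ((p == (q.1.1, q.2, q.1.2)) : nat)%:R :> k.
Proof.
case: p => [[a b] c]; case: q => [[u v] w] /=.
by rewrite /id_tau !xpair_eqE andbA.
Qed.

Lemma R13E a b c u v w :
  R13 (Rphi k phi) (a, b, c) (u, v, w) = (Rb a c u w && (b == v))%:R.
Proof.
rewrite /R13 /comp3.
rewrite (@sum_delta _ (a, c, b)); last first.
  move=> r Hr; rewrite id_tauE; case: r Hr => [[x y] z] Hr /=; case E: (_ == _) => //; last by rewrite mul0r.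
  by move: E Hr; rewrite !xpair_eqE => /andP[/andP[/eqP<- /eqP<-] /eqP<-]; rewrite !eqxx.
rewrite id_tauE eqxx mul1r.
rewrite (@sum_delta _ (u, w, v)); last first.
  move=> r Hr; rewrite id_tauE /=.
  by case: r Hr => [[x y] z] Hr; rewrite (negbTE Hr) mulr0.
by rewrite id_tauE eqxx mulr1 R12E.
Qed.

Lemma tauE1 (p q : idx2 n) : @tau k n p q = ((q == (p.2, p.1)) : nat)%:R.
Proof.
case: p => a b; case: q => x y; rewrite /tau /= xpair_eqE.
by rewrite andbC (eq_sym a) (eq_sym b).
Qed.

Lemma tauE2 (p q : idx2 n) : @tau k n p q = ((p == (q.2, q.1)) : nat)%:R.
Proof. by case: p => a b; case: q => x y; rewrite /tau /= xpair_eqE. Qed.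

Definition T3 (p q : idx3 n) : k :=
  let: (a, b, c) := p in let: (u, v, w) := q in
  [&& u == v, v == w, phi a == u, phi b == u & phi c == u]%:R.

End Aux.

Ltac destrh h := repeat (match goal with
  | |- is_true (_ && _) -> _ => case/andP
  | |- is_true (_ == _) -> _ => let H := fresh "H" in move/eqP; rewrite ?h => H
  | |- _ -> _ => let H := fresh "H" in move=> H
  end); subst.

Ltac destr := destrh eqxx.
Ltac crush h := destrh h; rewrite ?eqxx ?andbT //=; repeat (apply/andP; split); try (apply/eqP); try congruence.

Theorem proposition3p4 (k : fieldType) (n : nat) (phi : 'I_n -> 'I_n)
  (hphi : forall i, phi (phi i) = phi i) :
  let R := Rphi k phi in
  symmetricR R /\
  comp3 (R12 R) (R13 R) = comp3 (R13 R) (R12 R) /\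
  comp3 (R13 R) (R12 R) = comp3 (R12 R) (R23 R) /\
  comp3 (R12 R) (R23 R) = comp3 (R23 R) (R12 R).
Proof.
rewrite /=.
have E1 : comp3 (R12 (Rphi k phi)) (R13 (Rphi k phi)) = T3 k phi.
  apply: functional_extensionality => -[[a b] c].
  apply: functional_extensionality => -[[u v] w].
  rewrite /comp3.
  pose B := fun r : idx3 n => let: (x, y, z) := r in
     ((Rb phi a b x y && (c == z)) && (Rb phi x z u w && (y == v))).
  rewrite (eq_bigr (fun r => (B r)%:R)); last first.
    by move=> -[[x y] z] _; rewrite R12E R13E -natrM mulnb.
  rewrite (@sum_bool _ _ (v, v, c) B); last first.
    by move=> [[x y] z] /=; rewrite /Rb; destr.
  rewrite /B /T3; congr (_ %:R); congr (nat_of_bool _); clear B; rewrite /Rb; apply/idP/idP; crush hphi.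
have E2 : comp3 (R13 (Rphi k phi)) (R12 (Rphi k phi)) = T3 k phi.
  apply: functional_extensionality => -[[a b] c].
  apply: functional_extensionality => -[[u v] w].
  rewrite /comp3.
  pose B := fun r : idx3 n => let: (x, y, z) := r in
     ((Rb phi a c x z && (b == y)) && (Rb phi x y u v && (z == w))).
  rewrite (eq_bigr (fun r => (B r)%:R)); last first.
    by move=> -[[x y] z] _; rewrite R13E R12E -natrM mulnb.
  rewrite (@sum_bool _ _ (w, b, w) B); last first.
    by move=> [[x y] z] /=; rewrite /Rb; destr.
  rewrite /B /T3; congr (_ %:R); congr (nat_of_bool _); clear B; rewrite /Rb; apply/idP/idP; crush hphi.
have E3 : comp3 (R12 (Rphi k phi)) (R23 (Rphi k phi)) = T3 k phi.
  apply: functional_extensionality => -[[a b] c].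
  apply: functional_extensionality => -[[u v] w].
  rewrite /comp3.
  pose B := fun r : idx3 n => let: (x, y, z) := r in
     ((Rb phi a b x y && (c == z)) && ((x == u) && Rb phi y z v w)).
  rewrite (eq_bigr (fun r => (B r)%:R)); last first.
    by move=> -[[x y] z] _; rewrite R12E R23E -natrM mulnb.
  rewrite (@sum_bool _ _ (u, u, c) B); last first.
    by move=> [[x y] z] /=; rewrite /Rb; destr.
  rewrite /B /T3; congr (_ %:R); congr (nat_of_bool _); clear B; rewrite /Rb; apply/idP/idP; crush hphi.
have E4 : comp3 (R23 (Rphi k phi)) (R12 (Rphi k phi)) = T3 k phi.
  apply: functional_extensionality => -[[a b] c].
  apply: functional_extensionality => -[[u v] w].
  rewrite /comp3.
  pose B := fun r : idx3 n => let: (x, y, z) := r in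
     (((a == x) && Rb phi b c y z) && (Rb phi x y u v && (z == w))).
  rewrite (eq_bigr (fun r => (B r)%:R)); last first.
    by move=> -[[x y] z] _; rewrite R23E R12E -natrM mulnb.
  rewrite (@sum_bool _ _ (a, w, w) B); last first.
    by move=> [[x y] z] /=; rewrite /Rb; destr.
  rewrite /B /T3; congr (_ %:R); congr (nat_of_bool _); clear B; rewrite /Rb; apply/idP/idP; crush hphi.
rewrite E1 E2 E3 E4; split => //.
split.
  apply: functional_extensionality => -[a b].
  apply: functional_extensionality => -[i j].
  rewrite /R21 /comp2.
  rewrite (@sum_delta _ _ (b, a)); last first.
    move=> r Hr; rewrite tauE1 (negbTE Hr) mul0r //.
  rewrite tauE1 eqxx mul1r.
  rewrite (@sum_delta _ _ (j, i)); last first.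
    move=> r Hr; rewrite tauE2 (negbTE Hr) mulr0 //.
  rewrite tauE2 eqxx mulr1 !RphiE; congr (_ %:R); congr (nat_of_bool _).
  rewrite /Rb; apply/idP/idP; crush hphi.
move=> i j u v; rewrite !RphiE; congr (_ %:R); congr (nat_of_bool _).
rewrite /Rb; apply/idP/idP; crush hphi.
Qed.
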